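(* Suppose $s>1/2$ and $g\in H^s(\mathbb U)$. Then there exists a constant $C_s>0$ such that for all $N,M\ge1$, $$\|\mathcal I_N\mathcal M(g)\mathcal C^+-\mathcal I_N\mathcal M(\mathcal P_Mg)\mathcal C^+\|_s\le C_s\|g-\mathcal P_Mg\|_s,\qquad\|\mathcal P_N\mathcal M(g)\mathcal C^+-\mathcal P_N\mathcal M(\mathcal P_Mg)\mathcal C^+\|_s\le C_s\|g-\mathcal P_Mg\|_s.$$
   Context: $\mathbb U=\{|z|=1\}$. For $u\in L^2(\mathbb U)$, $u(z)=\sum_ju_jz^j$; $H^s(\mathbb U)$ has norm $\|u\|_s^2=c_{|s|}\sum_j|u_j|^2\max\{1,|j|\}^{2s}$ with fixed constants $c_{|s|}>0$ chosen so that $\|uv\|_s\le\|u\|_s\|v\|_s$ for $s>1/2$; $\|\cdot\|_s$ also denotes the operator norm on $H^s(\mathbb U)$. $\mathcal M(g)u=gu$. $\mathcal C^+u=\sum_{j\ge0}u_jz^j$ (boundary value from inside of the Cauchy integral). For $N\ge1$, $N_-=\lfloor N/2\rfloor$, $N_+=\lfloor(N-1)/2\rfloor$, $\mathcal P_Nu=\sum_{j=-N_-}^{N_+}u_jz^j$, and $\mathcal I_Nu=\sum_{j=-N_-}^{N_+}\check u_jz^j$ is the trigonometric interpolant at the nodes $e^{2\pi i(\ell-1)/N}$, $\ell=1,\dots,N$, i.e. $\check u_j=\sum_{p\in\mathbb Z}u_{pN+j}$. *)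

(* Defs.v *)
From Stdlib Require Import Reals ZArith.
From Coquelicot Require Import Coquelicot.
Open Scope R_scope.

(* A function u in L^2(U) is represented by its Fourier coefficients u_j, j in Z:
   u(z) = sum_j u_j z^j. *)
Definition fseq := Z -> C.

Definition zpair (f : Z -> C) (n : nat) : C :=
  Cplus (f (Z.of_nat n)) (f (- Z.of_nat (S n))%Z).
Definition zpairR (f : Z -> R) (n : nat) : R :=
  f (Z.of_nat n) + f (- Z.of_nat (S n))%Z.

(* Sum over Z of a complex family (used only for absolutely summable families,
   where it is the usual sum). *)
Definition Zsum (f : Z -> C) : C :=
  (Series (fun n => Re (zpair f n)), Series (fun n => Im (zpair f n))).

Definition hterm (s : R) (u : fseq) (j : Z) : R :=
  (Cmod (u j)) ^ 2 * Rpower (IZR (Z.max 1 (Z.abs j))) (2 * s).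

Definition Hs (s : R) (u : fseq) : Prop := ex_series (zpairR (hterm s u)).

(* ||u||_s (normalisation constant c_{|s|} := 1) *)
Definition hnorm (s : R) (u : fseq) : R := sqrt (Series (zpairR (hterm s u))).

(* Operator norm on H^s(U) (extended real; +oo if A does not map H^s into H^s). *)
Definition opnorm (s : R) (A : fseq -> fseq) : Rbar :=
  Lub_Rbar (fun r => exists u, Hs s u /\ 0 < hnorm s u /\
     (r = hnorm s (A u) / hnorm s u \/ ~ Hs s (A u))).

Definition fsub (u v : fseq) : fseq := fun j => Cminus (u j) (v j).
Definition opsub (A B : fseq -> fseq) : fseq -> fseq := fun u => fsub (A u) (B u).

Definition Mop (g : fseq) (u : fseq) : fseq :=
  fun j => Zsum (fun k => Cmult (g k) (u (j - k)%Z)).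

Definition Cplus_op (u : fseq) : fseq :=
  fun j => if Z.leb 0 j then u j else RtoC 0.

Definition Nminus (N : nat) : Z := (Z.of_nat N / 2)%Z.
Definition Nplus (N : nat) : Z := ((Z.of_nat N - 1) / 2)%Z.
Definition inrange (N : nat) (j : Z) : bool :=
  Z.leb (- Nminus N) j && Z.leb j (Nplus N).

Definition Pop (N : nat) (u : fseq) : fseq :=
  fun j => if inrange N j then u j else RtoC 0.

(* trigonometric interpolant I_N: coefficients check u_j = sum_p u_{pN+j} *)
Definition Iop (N : nat) (u : fseq) : fseq :=
  fun j => if inrange N j then Zsum (fun p => u (p * Z.of_nat N + j)%Z) else RtoC 0.

(* Main.v *)
Require Import Defs.
From Stdlib Require Import Reals ZArith List Lia Lra Psatz.
From Coquelicot Require Import Coquelicot.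
Import ListNotations.
Open Scope R_scope.

Lemma sum_n_S (a : nat -> R) n : sum_n a (S n) = sum_n a n + a (S n).
Proof. rewrite sum_Sn. reflexivity. Qed.

Lemma nonneg_bounded_series (a : nat -> R) B :
  (forall n, 0 <= a n) -> (forall n, sum_n a n <= B) -> ex_series a /\ Series a <= B.
Proof.
  intros Hp Hb.
  assert (Hf : ex_finite_lim_seq (sum_n a)).
  { apply ex_finite_lim_seq_incr with B; auto.
    intros n; rewrite sum_n_S; specialize (Hp (S n)); lra. }
  destruct Hf as [l Hl].
  split.
  - exists l. exact Hl.
  - unfold Series. rewrite (is_lim_seq_unique _ _ Hl). simpl.
    assert (H := is_lim_seq_le (sum_n a) (fun _ => B) l B Hb Hl (is_lim_seq_const B)).
    exact H.
Qed.

Lemma partial_le_series (a : nat -> R) n :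
  (forall n, 0 <= a n) -> ex_series a -> sum_n a n <= Series a.
Proof.
  intros Hp He. apply is_lim_seq_incr_compare.
  - apply (Series_correct a He).
  - intros k; rewrite sum_n_S; specialize (Hp (S k)); lra.
Qed.

Lemma Series_nonneg (a : nat -> R) : (forall n, 0 <= a n) -> 0 <= Series a.
Proof.
  intros Hp. destruct (ex_finite_lim_seq_dec (sum_n a)) as [[l Hl]|Hn].
  - unfold Series; rewrite (is_lim_seq_unique _ _ Hl); simpl.
    assert (H := is_lim_seq_le (fun _ => 0) (sum_n a) 0 l).
    apply H; auto. 2: apply is_lim_seq_const.
    intros n; induction n. rewrite sum_O; auto. rewrite sum_n_S; specialize (Hp (S n)); lra.
  - unfold Series. destruct (Lim_seq (sum_n a)) eqn:E; simpl; try lra.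
    exfalso; apply Hn. 
    destruct (ex_lim_seq_dec (sum_n a)) as [He|He].
    + exists r. rewrite <- E. apply Lim_seq_correct. auto.
    + exfalso. apply He. apply ex_lim_seq_incr. intros k; rewrite sum_n_S; specialize (Hp (S k)); lra.
Qed.

Definition NS (F : Z -> R) : R := Series (zpairR F).
Definition summ (F : Z -> R) : Prop := ex_series (zpairR F).
Definition nng (F : Z -> R) : Prop := forall x, 0 <= F x.

Fixpoint lsum (F : Z -> R) (l : list Z) : R :=
  match l with [] => 0 | x :: l' => F x + lsum F l' end.

Fixpoint box (n : nat) : list Z :=
  match n with
  | O => [Z.of_nat 0; (- Z.of_nat 1)%Z]
  | S n' => Z.of_nat (S n') :: (- Z.of_nat (S (S n')))%Z :: box n'
  end.

Lemma lsum_app F l1 l2 : lsum F (l1 ++ l2) = lsum F l1 + lsum F l2.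
Proof. induction l1; simpl; [ring | rewrite IHl1; ring]. Qed.

Lemma lsum_nonneg F l : nng F -> 0 <= lsum F l.
Proof. intros H; induction l; simpl; [lra| specialize (H a); lra]. Qed.

Lemma lsum_box F n : lsum F (box n) = sum_n (zpairR F) n.
Proof.
  induction n.
  - rewrite sum_O. unfold zpairR. simpl. rewrite Rplus_0_r. reflexivity.
  - rewrite sum_n_S, <- IHn. unfold zpairR. cbn [lsum box]. lra.
Qed.

Lemma in_box n x : In x (box n) <-> (- (Z.of_nat n + 1) <= x <= Z.of_nat n)%Z.
Proof.
  induction n; simpl.
  - split. intros [H|[H|[]]]; subst; lia. intros H. lia.
  - rewrite IHn. split. intros [H|[H|H]]; lia. intros H.
    destruct (Z.eq_dec x (Z.pos (Pos.of_succ_nat n))). left; lia.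
    destruct (Z.eq_dec x (- Z.pos (Pos.succ (Pos.of_succ_nat n)))%Z). right; left; lia.
    right; right; lia.
Qed.

Lemma box_NoDup n : NoDup (box n).
Proof.
  induction n; simpl.
  - constructor. simpl. lia. constructor. simpl; auto. constructor.
  - constructor. intros [H|H]; [lia| apply in_box in H; lia].
    constructor. intros H; apply in_box in H; lia. exact IHn.
Qed.

Lemma incl_box (L : list Z) : exists n, forall x, In x L -> In x (box n).
Proof.
  induction L as [|a L IH].
  - exists O. intros x [].
  - destruct IH as [n Hn]. exists (Nat.max n (Z.to_nat (Z.abs a))).
    intros x [H|H].
    + subst. rewrite in_box. lia.
    + apply Hn in H. rewrite in_box in H |- *. lia.
Qed.

Lemma lsum_incl F L L' : nng F -> NoDup L -> incl L L' -> lsum F L <= lsum F L'.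
Proof.
  intros HF HN. revert L'. induction HN as [|a L Ha HN IH]; intros L' Hi.
  - simpl. apply lsum_nonneg; auto.
  - assert (Hin : In a L') by (apply Hi; left; auto).
    destruct (in_split _ _ Hin) as [A [B E]]. subst L'.
    rewrite lsum_app. simpl.
    assert (lsum F L <= lsum F (A ++ B)).
    { apply IH. intros y Hy. assert (In y (A ++ a :: B)) by (apply Hi; right; auto).
      apply in_app_or in H. apply in_or_app. destruct H as [H|[H|H]]; auto.
      subst; contradiction. }
    rewrite lsum_app in H. lra.
Qed.

Lemma zpairR_nonneg F : nng F -> forall n, 0 <= zpairR F n.
Proof. intros H n; unfold zpairR; pose proof (H (Z.of_nat n)); pose proof (H (- Z.of_nat (S n))%Z); lra. Qed.

Lemma NS_nonneg F : nng F -> 0 <= NS F.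
Proof. intros H; apply Series_nonneg, zpairR_nonneg, H. Qed.

Lemma lsum_le_NS F L : nng F -> summ F -> NoDup L -> lsum F L <= NS F.
Proof.
  intros HF HS HN. destruct (incl_box L) as [n Hn].
  eapply Rle_trans. apply lsum_incl; eauto.
  rewrite lsum_box. apply partial_le_series; auto. apply zpairR_nonneg; auto.
Qed.

Lemma single_le_NS F x : nng F -> summ F -> F x <= NS F.
Proof.
  intros HF HS. pose proof (lsum_le_NS F [x] HF HS). simpl in H.
  assert (NoDup [x]) by (constructor; [simpl; auto| constructor]). specialize (H H0). lra.
Qed.

Lemma NS_bounded F B : nng F -> (forall n, lsum F (box n) <= B) -> summ F /\ NS F <= B.
Proof.
  intros HF Hb. apply nonneg_bounded_series. apply zpairR_nonneg; auto.
  intros n. rewrite <- lsum_box. auto.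
Qed.

Lemma NS_bounded_L F B : nng F -> (forall L, NoDup L -> lsum F L <= B) -> summ F /\ NS F <= B.
Proof. intros HF Hb. apply NS_bounded; auto. intros n; apply Hb, box_NoDup. Qed.

Lemma NS_le F G : (forall x, 0 <= F x <= G x) -> summ G -> summ F /\ NS F <= NS G.
Proof.
  intros H HG. assert (nng F) by (intros x; apply H).
  assert (nng G) by (intros x; specialize (H x); lra).
  apply NS_bounded_L; auto. intros L HL. eapply Rle_trans. 2: apply lsum_le_NS; eauto.
  clear HL. induction L; simpl. lra. specialize (H a). lra.
Qed.

Lemma summ_le F G : (forall x, 0 <= F x <= G x) -> summ G -> summ F.
Proof. intros; apply (NS_le F G); auto. Qed.

Lemma sq_le_le a b : 0 <= b -> a*a <= b*b -> a <= b.
Proof. intros. destruct (Rle_lt_dec a b); auto. assert (b*b < a*a) by (apply Rmult_le_0_lt_compat; lra). lra. Qed.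

Lemma cs_step f g X P Q : 0<=f -> 0<=g -> 0<=X -> 0<=P -> 0<=Q -> X*X <= P*Q ->
  (f*g+X)*(f*g+X) <= (f*f+P)*(g*g+Q).
Proof.
intros.
assert (2*f*g*X <= f*f*Q+g*g*P).
{ assert (0 <= f*f*Q+g*g*P) by nra.
  apply sq_le_le; auto.
  { assert (0 <= (f*f*Q-g*g*P)*(f*f*Q-g*g*P)) by (pose proof (Rle_0_sqr (f*f*Q-g*g*P)); unfold Rsqr in *; lra).
    assert (f*g*(f*g) * (X*X) <= f*g*(f*g)*(P*Q)) by (apply Rmult_le_compat_l; nra). lra. }
  }
nra.
Qed.

Lemma NS_ext_eq F G : (forall x, F x = G x) -> NS F = NS G.
Proof. intros H. unfold NS. apply Series_ext. intros n; unfold zpairR; rewrite !H; auto. Qed.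

Lemma summ_ext F G : (forall x, F x = G x) -> summ F -> summ G.
Proof. intros H S. unfold summ in *. eapply ex_series_ext. 2: exact S. intros n; unfold zpairR; rewrite !H; auto. Qed.

Lemma lsum_ext F G l : (forall x, F x = G x) -> lsum F l = lsum G l.
Proof. intros H; induction l; simpl; [auto| rewrite H, IHl; auto]. Qed.

Lemma lsum_le F G l : (forall x, F x <= G x) -> lsum F l <= lsum G l.
Proof. intros H; induction l; simpl; [lra| specialize (H a); lra]. Qed.

Lemma lsum_cs F G l : nng F -> nng G ->
  lsum (fun x => F x * G x) l * lsum (fun x => F x * G x) l <=
  lsum (fun x => F x * F x) l * lsum (fun x => G x * G x) l.
Proof.
  intros HF HG. induction l; simpl. lra.
  apply cs_step; auto. apply lsum_nonneg; intros x; apply Rmult_le_pos; auto.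
  apply lsum_nonneg; intros x; apply Rmult_le_pos; auto.
  apply lsum_nonneg; intros x; apply Rmult_le_pos; auto.
Qed.

Lemma NS_cs F G : nng F -> nng G -> summ (fun x => F x * F x) -> summ (fun x => G x * G x) ->
  summ (fun x => F x * G x) /\
  NS (fun x => F x * G x) <= sqrt (NS (fun x => F x * F x) * NS (fun x => G x * G x)).
Proof.
  intros HF HG S1 S2. apply NS_bounded_L. intros x; apply Rmult_le_pos; auto.
  intros L HL. rewrite <- (sqrt_square (lsum _ L)). 2: apply lsum_nonneg; intros x; apply Rmult_le_pos; auto.
  apply sqrt_le_1_alt. eapply Rle_trans. apply lsum_cs; auto.
  apply Rmult_le_compat. apply lsum_nonneg; intros x; apply Rmult_le_pos; auto.
  apply lsum_nonneg; intros x; apply Rmult_le_pos; auto.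
  apply lsum_le_NS; auto. intros x; apply Rmult_le_pos; auto.
  apply lsum_le_NS; auto. intros x; apply Rmult_le_pos; auto.
Qed.

Lemma summ_plus F G : summ F -> summ G -> summ (fun x => F x + G x).
Proof.
  intros H1 H2. unfold summ. eapply ex_series_ext. 2: apply (ex_series_plus _ _ H1 H2).
  intros n; unfold zpairR; simpl. change plus with Rplus. lra.
Qed.

Lemma NS_plus F G : summ F -> summ G -> NS (fun x => F x + G x) = NS F + NS G.
Proof.
  intros H1 H2. unfold NS. rewrite <- Series_plus; auto. apply Series_ext. intros n; unfold zpairR; lra.
Qed.

Lemma summ_scal c F : summ F -> summ (fun x => c * F x).
Proof.
  intros H1. unfold summ. eapply ex_series_ext. 2: apply (ex_series_scal_l c _ H1).
  intros n; unfold zpairR. simpl. unfold scal; simpl. unfold mult; simpl. ring.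
Qed.

Lemma NS_scal c F : NS (fun x => c * F x) = c * NS F.
Proof.
  unfold NS. rewrite <- Series_scal_l. apply Series_ext. intros n; unfold zpairR; ring.
Qed.

Lemma summ_zero : summ (fun _ => 0) /\ NS (fun _ => 0) = 0.
Proof.
  assert (H : forall l, lsum (fun _ => 0) l = 0) by (induction l; simpl; lra).
  destruct (NS_bounded (fun _ => 0) 0) as [A B]. intros x; lra. intros n; rewrite H; lra.
  split; auto. pose proof (NS_nonneg (fun _ => 0)). assert (nng (fun _ : Z => 0)) by (intros x; lra). 
  specialize (H0 H1). lra.
Qed.

Lemma NS_lsum (H : Z -> Z -> R) L : (forall m, summ (H m)) ->
  summ (fun k => lsum (fun m => H m k) L) /\
  NS (fun k => lsum (fun m => H m k) L) = lsum (fun m => NS (H m)) L.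
Proof.
  intros HS. induction L as [|a L [IH1 IH2]]; simpl.
  - apply summ_zero.
  - split. apply summ_plus; auto. rewrite NS_plus; auto. rewrite IH2; auto.
Qed.

Lemma NS_reindex F (phi : Z -> Z) : (forall x y, phi x = phi y -> x = y) ->
  nng F -> summ F -> summ (fun x => F (phi x)) /\ NS (fun x => F (phi x)) <= NS F.
Proof.
  intros Hi HF HS. apply NS_bounded_L. intros x; apply HF.
  intros L HL. replace (lsum (fun x => F (phi x)) L) with (lsum F (map phi L)).
  apply lsum_le_NS; auto. apply NoDup_map_NoDup_ForallPairs; auto.
  intros x y _ _ E; apply Hi, E.
  clear HL; induction L; simpl; auto. rewrite IHL; auto.
Qed.

Lemma NS_tonelli (H : Z -> Z -> R) :
  (forall m k, 0 <= H m k) -> (forall m, summ (H m)) -> (forall k, summ (fun m => H m k)) ->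
  summ (fun k => NS (fun m => H m k)) ->
  summ (fun m => NS (H m)) /\ NS (fun m => NS (H m)) <= NS (fun k => NS (fun m => H m k)).
Proof.
  intros Hp S1 S2 S3. apply NS_bounded_L. intros m; apply NS_nonneg; intros k; auto.
  intros L HL. destruct (NS_lsum H L S1) as [A B]. rewrite <- B.
  apply NS_le; auto. intros k; split. apply lsum_nonneg; intros m; auto.
  apply lsum_le_NS; auto. intros m; auto.
Qed.

Definition abss (f : Z -> C) : Prop := summ (fun k => Cmod (f k)).

Lemma im_le_Cmod (c : C) : Rabs (Im c) <= Cmod c.
Proof. pose proof (Rmax_Cmod c). pose proof (Rmax_r (Rabs (fst c)) (Rabs (snd c))). unfold Im. lra. Qed.

Lemma zpair_Cmod f n : Cmod (zpair f n) <= zpairR (fun k => Cmod (f k)) n.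
Proof. unfold zpair, zpairR. apply Cmod_triangle. Qed.

Lemma ex_Re f : abss f -> ex_series (fun n => Re (zpair f n)).
Proof.
  intros H. unfold abss, summ in H. apply ex_series_Rabs. apply (@ex_series_le R_AbsRing R_CompleteNormedModule) with (b := zpairR (fun k => Cmod (f k))). 2: exact H.
  intros n. change (Rabs (Rabs (Re (zpair f n))) <= zpairR (fun k => Cmod (f k)) n). rewrite Rabs_Rabsolu. eapply Rle_trans. apply re_le_Cmod. apply zpair_Cmod.
Qed.

Lemma ex_Im f : abss f -> ex_series (fun n => Im (zpair f n)).
Proof.
  intros H. unfold abss, summ in H. apply ex_series_Rabs. apply (@ex_series_le R_AbsRing R_CompleteNormedModule) with (b := zpairR (fun k => Cmod (f k))). 2: exact H.
  intros n. change (Rabs (Rabs (Im (zpair f n))) <= zpairR (fun k => Cmod (f k)) n). rewrite Rabs_Rabsolu. eapply Rle_trans. apply im_le_Cmod. apply zpair_Cmod.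
Qed.

Lemma Zsum_minus f1 f2 : abss f1 -> abss f2 ->
  Zsum (fun k => Cminus (f1 k) (f2 k)) = Cminus (Zsum f1) (Zsum f2).
Proof.
  intros H1 H2. unfold Zsum.
  pose proof (ex_Re _ H1). pose proof (ex_Re _ H2). pose proof (ex_Im _ H1). pose proof (ex_Im _ H2).
  transitivity (Series (fun n => Re (zpair f1 n)) - Series (fun n => Re (zpair f2 n)),
                Series (fun n => Im (zpair f1 n)) - Series (fun n => Im (zpair f2 n))).
  - f_equal.
    + rewrite <- (Series_minus _ _ H H0). apply Series_ext. intros n. unfold zpair, Cminus, Cplus, Copp. simpl. ring.
    + rewrite <- (Series_minus _ _ H3 H4). apply Series_ext. intros n. unfold zpair, Cminus, Cplus, Copp. simpl. ring.
  - unfold Cminus, Cplus, Copp. simpl. f_equal; ring.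
Qed.

Lemma cmod_pair_sq a b c : Cmod (a, b) <= c -> a*a + b*b <= c*c.
Proof.
  intros H. pose proof (Cmod2_alt (a,b)). pose proof (Cmod_ge_0 (a,b)).
  simpl in H0. unfold Re, Im in H0; simpl in H0.
  assert (Cmod (a,b) * Cmod (a,b) <= c*c) by (apply Rmult_le_compat; lra). nra.
Qed.

Lemma Zsum_bound f : abss f -> Cmod (Zsum f) <= NS (fun k => Cmod (f k)).
Proof.
  intros H.
  set (sr := sum_n (fun k => Re (zpair f k))). set (si := sum_n (fun k => Im (zpair f k))).
  assert (Hz : forall n, Cmod (sr n, si n) <= sum_n (zpairR (fun k => Cmod (f k))) n).
  { induction n.
    - unfold sr, si. rewrite !sum_O. destruct (zpair f 0) as [x y] eqn:E. simpl.
      rewrite <- E. apply zpair_Cmod.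
    - unfold sr, si in *. rewrite !sum_n_S.
      pose proof (zpair_Cmod f (S n)) as Z1.
      set (A := sum_n (fun k : nat => Re (zpair f k)) n) in *.
      set (B := sum_n (fun k : nat => Im (zpair f k)) n) in *.
      pose proof (Cmod_triangle (A, B) (zpair f (S n))) as T.
      destruct (zpair f (S n)) as [x y].
      change (Cmod (Cplus (A, B) (x, y)) <= sum_n (zpairR (fun k : Z => Cmod (f k))) n + zpairR (fun k : Z => Cmod (f k)) (S n)).
      lra. }
  assert (HN : forall n, sum_n (zpairR (fun k => Cmod (f k))) n <= NS (fun k => Cmod (f k))).
  { intros n. apply partial_le_series. apply zpairR_nonneg. intros x; apply Cmod_ge_0. exact H. }
  assert (H0 : 0 <= NS (fun k => Cmod (f k))). { apply NS_nonneg. intros x; apply Cmod_ge_0. }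
  assert (Hsq : forall n, sr n * sr n + si n * si n <= NS (fun k => Cmod (f k)) * NS (fun k => Cmod (f k))).
  { intros n. specialize (Hz n). specialize (HN n). apply cmod_pair_sq. eapply Rle_trans; [exact Hz| exact HN]. }
  assert (Lr : is_lim_seq sr (Series (fun n => Re (zpair f n)))) by apply (Series_correct _ (ex_Re _ H)).
  assert (Li : is_lim_seq si (Series (fun n => Im (zpair f n)))) by apply (Series_correct _ (ex_Im _ H)).
  assert (L := is_lim_seq_plus' _ _ _ _ (is_lim_seq_mult' _ _ _ _ Lr Lr) (is_lim_seq_mult' _ _ _ _ Li Li)).
  assert (Hle := is_lim_seq_le _ _ _ _ Hsq L (is_lim_seq_const _)). simpl in Hle.
  unfold Zsum, Cmod. simpl. rewrite <- (sqrt_square (NS _)); auto. apply sqrt_le_1_alt. rewrite !Rmult_1_r. exact Hle.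
Qed.

Definition W (j : Z) : R := IZR (Z.max 1 (Z.abs j)).
Definition wt (e : R) (j : Z) : R := Rpower (W j) e.

Lemma W_ge1 j : 1 <= W j.
Proof. unfold W. apply IZR_le. lia. Qed.
Lemma W_pos j : 0 < W j.
Proof. pose proof (W_ge1 j); lra. Qed.
Lemma wt_pos e j : 0 < wt e j.
Proof. unfold wt, Rpower. apply exp_pos. Qed.
Lemma wt_plus a b j : wt (a + b) j = wt a j * wt b j.
Proof. unfold wt. apply Rpower_plus. Qed.
Lemma wt_0 j : wt 0 j = 1.
Proof. unfold wt. apply Rpower_O, W_pos. Qed.
Lemma wt_ge1 e j : 0 <= e -> 1 <= wt e j.
Proof.
  intros He. unfold wt. rewrite <- (Rpower_O (W j)) at 1 by apply W_pos.
  apply Rle_Rpower; auto. apply W_ge1.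
Qed.

Lemma W_alias (N : nat) p j : (1 <= N)%nat -> inrange N j = true -> W p * W j <= W (p * Z.of_nat N + j).
Proof.
  intros HN Hr. unfold inrange, Defs.Nminus, Defs.Nplus in Hr. apply Bool.andb_true_iff in Hr. destruct Hr as [H1 H2].
  apply Z.leb_le in H1; apply Z.leb_le in H2.
  unfold W. rewrite <- mult_IZR. apply IZR_le.
  assert (2 * Z.abs j <= Z.of_nat N)%Z.
  { pose proof (Z.div_mod (Z.of_nat N) 2 ltac:(lia)). pose proof (Z.mod_pos_bound (Z.of_nat N) 2 ltac:(lia)).
    pose proof (Z.div_mod (Z.of_nat N - 1) 2 ltac:(lia)). pose proof (Z.mod_pos_bound (Z.of_nat N - 1) 2 ltac:(lia)). lia. }
  destruct (Z.eq_dec p 0). subst. rewrite Z.mul_0_l, Z.add_0_l. lia.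
  destruct (Z.eq_dec j 0). subst. rewrite Z.add_0_r. 
  assert (Z.abs p <= Z.abs (p * Z.of_nat N))%Z. { rewrite Z.abs_mul. nia. } lia.
  assert (Z.abs p * Z.abs j <= Z.abs (p * Z.of_nat N + j))%Z.
  { assert (Z.abs (p * Z.of_nat N) - Z.abs j <= Z.abs (p * Z.of_nat N + j))%Z by lia.
    rewrite Z.abs_mul in H0. nia. }
  rewrite Z.max_r by lia. rewrite Z.max_r by lia. rewrite Z.max_r by nia. lia.
Qed.

Lemma W_sub m k : W m <= W k + W (m - k).
Proof. unfold W. rewrite <- plus_IZR. apply IZR_le. lia. Qed.

Lemma wt_sub s m k : 0 <= s -> wt s m <= Rpower 2 s * (wt s k + wt s (m - k)).
Proof.
  intros Hs. unfold wt.
  assert (W m <= 2 * Rmax (W k) (W (m - k))).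
  { pose proof (W_sub m k). pose proof (Rmax_l (W k) (W (m-k))). pose proof (Rmax_r (W k) (W (m-k))). lra. }
  eapply Rle_trans. apply Rle_Rpower_l; eauto. split. apply W_pos. exact H.
  rewrite <- Rpower_mult_distr. 2: lra. 2: { pose proof (W_pos k). pose proof (Rmax_l (W k) (W (m-k))). lra. }
  apply Rmult_le_compat_l. unfold Rpower; left; apply exp_pos.
  pose proof (exp_pos (s * ln (W k))). pose proof (exp_pos (s * ln (W (m - k)))). unfold Rpower.
  apply Rmax_case; lra.
Qed.

Lemma ln_le_m1 z : 0 < z -> ln z <= z - 1.
Proof. intros. pose proof (exp_ineq1_le (ln z)). rewrite exp_ln in H0; lra. Qed.

Lemma tele a x : 1 < a -> 0 < x ->
  (a - 1) * Rpower (x + 1) (- a) <= Rpower x (1 - a) - Rpower (x + 1) (1 - a).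
Proof.
  intros Ha Hx. unfold Rpower. set (y := x + 1). set (L := ln y). set (l := ln x).
  assert (Hy : 0 < y) by (unfold y; lra).
  assert (HLl : 1 / y <= L - l).
  { unfold L, l. replace (ln y - ln x) with (- ln (x / y)).
    pose proof (ln_le_m1 (x / y)). assert (0 < x / y) by (apply Rdiv_lt_0_compat; lra).
    specialize (H H0). replace (x / y) with (1 - 1 / y) in * by (unfold y; field; lra). lra.
    rewrite ln_div; lra. }
  assert (E1 : exp ((1 - a) * l) = exp ((1 - a) * L) * exp ((a - 1) * (L - l))).
  { rewrite <- exp_plus. f_equal. ring. }
  assert (E2 : exp (- a * L) = exp ((1 - a) * L) * (1 / y)).
  { replace (- a * L) with ((1 - a) * L + - L) by ring. rewrite exp_plus. f_equal.
    unfold L. rewrite exp_Ropp, exp_ln; auto. field. lra. }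
  rewrite E1, E2. pose proof (exp_ineq1_le ((a - 1) * (L - l))).
  pose proof (exp_pos ((1 - a) * L)).
  assert ((a - 1) * (1 / y) <= (a - 1) * (L - l)) by (apply Rmult_le_compat_l; lra).
  nra.
Qed.

Lemma W_nat n : (1 <= n)%nat -> W (Z.of_nat n) = INR n.
Proof. intros. unfold W. rewrite INR_IZR_INZ. f_equal. lia. Qed.
Lemma W_negnat n : W (- Z.of_nat (S n))%Z = INR (S n).
Proof. unfold W. rewrite INR_IZR_INZ. f_equal. lia. Qed.

Lemma exp_le x y : x <= y -> exp x <= exp y.
Proof. intros [H|H]. left; apply exp_increasing; auto. subst; lra. Qed.

Lemma wt_le1 e j : e <= 0 -> wt e j <= 1.
Proof.
  intros He. unfold wt, Rpower. rewrite <- exp_0. apply exp_le.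
  pose proof (W_ge1 j). assert (0 <= ln (W j)) by (rewrite <- ln_1; apply ln_le; lra). nra.
Qed.

Lemma Rpower_anti x y e : 0 < x -> x <= y -> e <= 0 -> Rpower y e <= Rpower x e.
Proof.
  intros. unfold Rpower. apply exp_le. assert (ln x <= ln y) by (apply ln_le; lra). nra.
Qed.

Lemma Rpower_base1 e : Rpower 1 e = 1.
Proof. unfold Rpower. rewrite ln_1, Rmult_0_r, exp_0. auto. Qed.

Lemma zeta_summ a : 1 < a -> summ (wt (- a)).
Proof.
  intros Ha.
  assert (Hnn : nng (wt (- a))) by (intros x; left; apply wt_pos).
  assert (Hle1 : forall j, wt (- a) j <= 1) by (intros j; apply wt_le1; lra).
  set (c := 2 / (a - 1)).
  assert (Hc : 0 < c) by (unfold c; apply Rdiv_lt_0_compat; lra).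
  assert (HP : forall K, sum_n (zpairR (wt (- a))) (S K) <= 4 + c - c * Rpower (INR (S K)) (1 - a)).
  { intros K. induction K.
    - rewrite sum_n_S, sum_O. unfold zpairR.
      pose proof (Hle1 (Z.of_nat 0)). pose proof (Hle1 (- Z.of_nat 1)%Z).
      pose proof (Hle1 (Z.of_nat 1)). pose proof (Hle1 (- Z.of_nat 2)%Z).
      replace (INR 1) with 1 by auto. rewrite Rpower_base1. lra.
    - rewrite sum_n_S. 
      unfold zpairR at 2. unfold wt. rewrite W_negnat, W_nat by lia.
      pose proof (tele a (INR (S K)) Ha ltac:(apply lt_0_INR; lia)).
      replace (INR (S K) + 1) with (INR (S (S K))) in H by (rewrite (S_INR (S K)); auto).
      assert (Rpower (INR (S (S (S K)))) (- a) <= Rpower (INR (S (S K))) (- a)).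
      { apply Rpower_anti. apply lt_0_INR; lia. apply le_INR; lia. lra. }
      assert (c * ((a - 1) * Rpower (INR (S (S K))) (- a)) = 2 * Rpower (INR (S (S K))) (- a)) by (unfold c; field; lra).
      assert (c * ((a - 1) * Rpower (INR (S (S K))) (- a)) <= c * (Rpower (INR (S K)) (1 - a) - Rpower (INR (S (S K))) (1 - a))).
      { apply Rmult_le_compat_l; lra. }
      rewrite <- lsum_box in IHK |- *. unfold wt in *. lra. }
  assert (HR : forall K, 0 <= c * Rpower (INR K) (1 - a)).
  { intros K. apply Rmult_le_pos. lra. unfold Rpower; left; apply exp_pos. }
  apply (NS_bounded _ (4 + c) Hnn). intros n. rewrite lsum_box. destruct n.
  - rewrite sum_O. unfold zpairR. pose proof (Hle1 (Z.of_nat 0)). pose proof (Hle1 (- Z.of_nat 1)%Z). lra.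
  - specialize (HP n). specialize (HR (S n)). lra.
Qed.

Definition sqf (F : Z -> R) : Z -> R := fun x => F x * F x.

Lemma shift_inj m : forall x y : Z, (m - x)%Z = (m - y)%Z -> x = y.
Proof. intros; lia. Qed.

Lemma summ_shift Q m : nng Q -> summ Q -> summ (fun k => Q (m - k)%Z) /\ NS (fun k => Q (m - k)%Z) <= NS Q.
Proof. intros. apply (NS_reindex Q (fun k => (m - k)%Z)); auto. apply shift_inj. Qed.

Lemma sqrt_bound_sq x y : 0 <= x -> x <= sqrt y -> 0 <= y -> x * x <= y.
Proof. intros. rewrite <- (sqrt_sqrt y) by auto. apply Rmult_le_compat; auto. Qed.

Lemma young P Q : nng P -> nng Q -> summ (sqf P) -> summ Q ->
  (forall m, summ (fun k => P k * Q (m - k)%Z)) /\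
  summ (sqf (fun m => NS (fun k => P k * Q (m - k)%Z))) /\
  NS (sqf (fun m => NS (fun k => P k * Q (m - k)%Z))) <= NS Q * NS Q * NS (sqf P).
Proof.
  intros HP HQ SP SQ.
  assert (HPb : forall k, P k <= sqrt (NS (sqf P))).
  { intros k. rewrite <- (sqrt_square (P k)) by auto. apply sqrt_le_1_alt.
    apply (single_le_NS (sqf P)); auto. intros x; unfold sqf; apply Rmult_le_pos; auto. }
  assert (HQb : forall k, Q k <= NS Q) by (intros; apply single_le_NS; auto).
  assert (S1 : forall m, summ (fun k => P k * Q (m - k)%Z)).
  { intros m. apply summ_le with (G := fun k => sqrt (NS (sqf P)) * Q (m - k)%Z).
    intros k; split. apply Rmult_le_pos; auto. apply Rmult_le_compat_r; auto.
    apply summ_scal. apply summ_shift; auto. }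
  set (H := fun m k => P k * P k * Q (m - k)%Z).
  assert (HH : forall m k, 0 <= H m k) by (intros; unfold H; apply Rmult_le_pos; [apply Rmult_le_pos|]; auto).
  assert (SH1 : forall m, summ (H m)).
  { intros m. apply summ_le with (G := fun k => NS Q * (P k * P k)).
    intros k; split. apply HH. unfold H. rewrite Rmult_comm. apply Rmult_le_compat_r. apply Rmult_le_pos; auto. auto.
    apply summ_scal. exact SP. }
  assert (SH2 : forall k, summ (fun m => H m k) /\ NS (fun m => H m k) <= P k * P k * NS Q).
  { intros k. unfold H.
    destruct (NS_reindex Q (fun m => (m - k)%Z)) as [A B]; auto. intros; lia.
    split. apply summ_scal. auto. rewrite NS_scal. apply Rmult_le_compat_l; auto. apply Rmult_le_pos; auto. }
  assert (SH3 : summ (fun k => NS (fun m => H m k))).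
  { apply summ_le with (G := fun k => NS Q * (P k * P k)).
    intros k; split. apply NS_nonneg; intros m; auto. destruct (SH2 k) as [_ B]. lra.
    apply summ_scal, SP. }
  destruct (NS_tonelli H HH SH1 (fun k => proj1 (SH2 k)) SH3) as [ST HT].
  assert (HT2 : NS (fun k => NS (fun m => H m k)) <= NS Q * NS (sqf P)).
  { rewrite <- NS_scal. apply NS_le. intros k; split. apply NS_nonneg; intros m; auto.
    destruct (SH2 k) as [_ B]. unfold sqf. lra. apply summ_scal, SP. }
  assert (PW : forall m, 0 <= NS (fun k => P k * Q (m - k)%Z) * NS (fun k => P k * Q (m - k)%Z) <= NS Q * NS (H m)).
  { intros m. split. apply Rmult_le_pos; apply NS_nonneg; intros k; apply Rmult_le_pos; auto.
    set (F := fun k => P k * sqrt (Q (m - k)%Z)). set (G := fun k => sqrt (Q (m - k)%Z)).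
    assert (E1 : forall k, F k * G k = P k * Q (m - k)%Z).
    { intros k; unfold F, G. rewrite Rmult_assoc, sqrt_sqrt; auto. }
    assert (E2 : forall k, F k * F k = H m k).
    { intros k; unfold F, H. replace (P k * sqrt (Q (m - k)%Z) * (P k * sqrt (Q (m - k)%Z))) with (P k * P k * (sqrt (Q (m - k)%Z) * sqrt (Q (m - k)%Z))) by ring. rewrite sqrt_sqrt; auto. }
    assert (E3 : forall k, G k * G k = Q (m - k)%Z) by (intros k; unfold G; rewrite sqrt_sqrt; auto).
    destruct (summ_shift Q m HQ SQ) as [A B].
    destruct (NS_cs F G) as [C D].
    intros k; unfold F; apply Rmult_le_pos; auto; apply sqrt_pos.
    intros k; apply sqrt_pos.
    eapply summ_le. 2: apply (SH1 m). intros k; rewrite E2; split; auto; lra.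
    eapply summ_le. 2: apply A. intros k; rewrite E3; split; auto; lra.
    rewrite (NS_ext_eq _ _ E1) in D. rewrite (NS_ext_eq _ _ E2), (NS_ext_eq _ _ E3) in D.
    apply sqrt_bound_sq in D. eapply Rle_trans. apply D. rewrite (Rmult_comm (NS Q)). apply Rmult_le_compat_l.
    apply NS_nonneg; intros k; apply HH. exact B.
    apply NS_nonneg. intros k; apply Rmult_le_pos; auto.
    apply Rmult_le_pos; apply NS_nonneg; intros k; [apply HH | apply HQ]. }
  split; [exact S1|].
  destruct (NS_le (sqf (fun m => NS (fun k => P k * Q (m - k)%Z))) (fun m => NS Q * NS (H m))) as [A B].
  exact PW. apply summ_scal, ST.
  split; auto. eapply Rle_trans. apply B. rewrite NS_scal. rewrite Rmult_assoc. apply Rmult_le_compat_l.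
  apply NS_nonneg; auto. eapply Rle_trans. apply HT. exact HT2.
Qed.

Ltac pos := repeat (first [ apply Rmult_le_pos | apply NS_nonneg | apply lsum_nonneg | apply sqrt_pos | apply Cmod_ge_0
   | (left; apply wt_pos) | intro | match goal with H : nng ?f |- 0 <= ?f _ => apply H end | assumption]).

Lemma wt_sq s k : wt s k * wt s k = wt (2 * s) k.
Proof. rewrite <- wt_plus. f_equal. ring. Qed.
Lemma wt_inv s k : wt (- s) k * wt s k = 1.
Proof. rewrite <- wt_plus. replace (- s + s) with 0 by ring. apply wt_0. Qed.

Definition Zs (s : R) : R := NS (wt (- (2 * s))).
Definition Kc (s : R) : R := 4 * Rpower 2 (2 * s) * Zs s.

Lemma l1_bound s a : nng a -> summ (fun k => a k * a k * wt (2 * s) k) -> 1/2 < s ->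
  summ a /\ NS a * NS a <= Zs s * NS (fun k => a k * a k * wt (2 * s) k).
Proof.
  intros Ha Sa Hs.
  assert (Sz : summ (wt (- (2 * s)))) by (apply zeta_summ; lra).
  destruct (NS_cs (wt (- s)) (fun k => wt s k * a k)) as [C D].
  intros k; left; apply wt_pos. intros k; apply Rmult_le_pos; [left; apply wt_pos| auto].
  eapply summ_ext. 2: exact Sz. intros k. cbv beta. rewrite (wt_sq (- s)). f_equal. ring.
  eapply summ_ext. 2: exact Sa. intros k. cbv beta. rewrite <- wt_sq. ring.
  assert (E : forall k, wt (- s) k * (wt s k * a k) = a k) by (intros k; rewrite <- Rmult_assoc, wt_inv; ring).
  split. eapply summ_ext. 2: exact C. exact E.
  rewrite (NS_ext_eq _ _ E) in D. apply sqrt_bound_sq in D.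
  - eapply Rle_trans. apply D. unfold Zs. apply Req_le. f_equal.
    + apply NS_ext_eq. intros k. rewrite wt_sq. f_equal. ring.
    + apply NS_ext_eq. intros k. rewrite <- wt_sq. ring.
  - pos.
  - pos.
Qed.

Lemma sq_sum_le x y : (x + y) * (x + y) <= 2 * (x * x + y * y).
Proof. pose proof (Rle_0_sqr (x - y)). unfold Rsqr in H. lra. Qed.

Lemma prod_bound s a b : 1/2 < s -> nng a -> nng b ->
  summ (fun k => a k * a k * wt (2 * s) k) -> summ (fun k => b k * b k * wt (2 * s) k) ->
  (forall m, summ (fun k => a k * b (m - k)%Z)) /\
  summ (fun m => wt (2 * s) m * sqf (fun m => NS (fun k => a k * b (m - k)%Z)) m) /\
  NS (fun m => wt (2 * s) m * sqf (fun m => NS (fun k => a k * b (m - k)%Z)) m)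
    <= Kc s * NS (fun k => a k * a k * wt (2 * s) k) * NS (fun k => b k * b k * wt (2 * s) k).
Proof.
  intros Hs Ha Hb Sa Sb.
  set (Na := NS (fun k => a k * a k * wt (2 * s) k)).
  set (Nb := NS (fun k => b k * b k * wt (2 * s) k)).
  assert (Hs0 : 0 <= s) by lra.
  set (A := fun k => wt s k * a k). set (B := fun k => wt s k * b k).
  assert (HA : nng A) by (unfold A; pos). assert (HB : nng B) by (unfold B; pos).
  assert (SA : summ (sqf A)) by (eapply summ_ext; [|exact Sa]; intros k; unfold sqf, A; cbv beta; rewrite <- wt_sq; ring).
  assert (SB : summ (sqf B)) by (eapply summ_ext; [|exact Sb]; intros k; unfold sqf, B; cbv beta; rewrite <- wt_sq; ring).
  assert (NA : NS (sqf A) = Na) by (apply NS_ext_eq; intros k; unfold sqf, A; rewrite <- wt_sq; ring).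
  assert (NB : NS (sqf B) = Nb) by (apply NS_ext_eq; intros k; unfold sqf, B; rewrite <- wt_sq; ring).
  destruct (l1_bound s a Ha Sa Hs) as [S1a L1a].
  destruct (l1_bound s b Hb Sb Hs) as [S1b L1b].
  fold Na in L1a. fold Nb in L1b.
  destruct (young A b HA Hb SA S1b) as [Y1a [Y1b Y1c]].
  destruct (young B a HB Ha SB S1a) as [Y2a [Y2b Y2c]].
  rewrite NA in Y1c. rewrite NB in Y2c.
  assert (Hwge : forall k, 1 <= wt s k) by (intros; apply wt_ge1; auto).
  assert (Sab : forall m, summ (fun k => a k * b (m - k)%Z)).
  { intros m. eapply summ_le. 2: apply (Y1a m). intros k; split. pos.
    apply Rmult_le_compat_r. pos. unfold A. specialize (Hwge k). specialize (Ha k). nra. }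
  assert (X2 : forall m, summ (fun k => a k * B (m - k)%Z) /\
      NS (fun k => a k * B (m - k)%Z) <= NS (fun k => B k * a (m - k)%Z)).
  { intros m. destruct (NS_reindex (fun k => B k * a (m - k)%Z) (fun k => (m - k)%Z)) as [U V].
    apply shift_inj. intros k; pos. apply Y2a.
    assert (E : forall k, B (m - k)%Z * a (m - (m - k))%Z = a k * B (m - k)%Z).
    { intros k. replace (m - (m - k))%Z with k by lia. ring. }
    split. eapply summ_ext; [exact E| exact U]. rewrite <- (NS_ext_eq _ _ E). exact V. }
  set (X1f := fun m => NS (fun k => A k * b (m - k)%Z)).
  set (X2f := fun m => NS (fun k => B k * a (m - k)%Z)).
  set (c2 := Rpower 2 s).
  assert (Hc2 : 0 < c2) by (unfold c2, Rpower; apply exp_pos).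
  assert (PW : forall m, wt s m * NS (fun k => a k * b (m - k)%Z) <= c2 * (X1f m + X2f m)).
  { intros m. rewrite <- NS_scal.
    assert (E : forall k, c2 * (A k * b (m - k)%Z + a k * B (m - k)%Z) =
                          c2 * (wt s k + wt s (m - k)) * (a k * b (m - k)%Z)).
    { intros k; unfold A, B; ring. }
    assert (S3 : summ (fun k => c2 * (A k * b (m - k)%Z + a k * B (m - k)%Z))).
    { apply summ_scal, summ_plus. apply Y1a. apply X2. }
    eapply Rle_trans. apply NS_le. 2: exact S3.
    intros k; split. pos. rewrite E. apply Rmult_le_compat_r. pos. apply wt_sub; auto.
    rewrite NS_scal. apply Rmult_le_compat_l. lra.
    rewrite NS_plus. 2: apply Y1a. 2: apply X2. unfold X1f, X2f.
    destruct (X2 m). lra. }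
  assert (c2sq : c2 * c2 = Rpower 2 (2 * s)).
  { unfold c2. rewrite <- Rpower_plus. f_equal. ring. }
  assert (PW2 : forall m, 0 <= wt (2 * s) m * sqf (fun m => NS (fun k => a k * b (m - k)%Z)) m
                     <= (2 * Rpower 2 (2 * s)) * (sqf X1f m + sqf X2f m)).
  { intros m. split. unfold sqf; pos. rewrite <- wt_sq. unfold sqf.
    specialize (PW m).
    assert (0 <= wt s m * NS (fun k => a k * b (m - k)%Z)) by pos.
    assert (0 <= X1f m) by (unfold X1f; pos). assert (0 <= X2f m) by (unfold X2f; pos).
    assert ((wt s m * NS (fun k => a k * b (m - k)%Z)) * (wt s m * NS (fun k => a k * b (m - k)%Z))
            <= (c2 * (X1f m + X2f m)) * (c2 * (X1f m + X2f m))) by (apply Rmult_le_compat; lra).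
    pose proof (sq_sum_le (X1f m) (X2f m)).
    rewrite <- c2sq.
    assert ((c2 * (X1f m + X2f m)) * (c2 * (X1f m + X2f m)) = c2 * c2 * ((X1f m + X2f m) * (X1f m + X2f m))) by ring.
    assert (c2 * c2 * ((X1f m + X2f m) * (X1f m + X2f m)) <= c2 * c2 * (2 * (X1f m * X1f m + X2f m * X2f m))).
    { apply Rmult_le_compat_l. nra. lra. }
    nra. }
  assert (SS : summ (fun m => (2 * Rpower 2 (2 * s)) * (sqf X1f m + sqf X2f m))).
  { apply summ_scal, summ_plus. exact Y1b. exact Y2b. }
  destruct (NS_le _ _ PW2 SS) as [R1 R2].
  split; [exact Sab|]. split; [exact R1|].
  eapply Rle_trans. exact R2. rewrite NS_scal, NS_plus by auto.
  fold X1f in Y1c. fold X2f in Y2c.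
  unfold Kc. fold Na Nb.
  assert (0 <= Zs s) by (unfold Zs; pos).
  assert (0 <= Na) by (unfold Na; pos). assert (0 <= Nb) by (unfold Nb; pos).
  assert (NS b * NS b * Na <= Zs s * Nb * Na) by (apply Rmult_le_compat_r; lra).
  assert (NS a * NS a * Nb <= Zs s * Na * Nb) by (apply Rmult_le_compat_r; lra).
  assert (0 < Rpower 2 (2 * s)) by (unfold Rpower; apply exp_pos).
  assert (NS (sqf X1f) + NS (sqf X2f) <= 2 * (Zs s * Na * Nb)) by lra.
  assert (2 * Rpower 2 (2 * s) * (NS (sqf X1f) + NS (sqf X2f)) <= 2 * Rpower 2 (2 * s) * (2 * (Zs s * Na * Nb))).
  { apply Rmult_le_compat_l; lra. }
  lra.
Qed.

Lemma inrange_bounds N j : (1 <= N)%nat -> inrange N j = true ->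
  (- (Z.of_nat N / 2) <= j <= (Z.of_nat N - 1) / 2)%Z.
Proof.
  intros HN Hr. unfold inrange, Defs.Nminus, Defs.Nplus in Hr. apply Bool.andb_true_iff in Hr.
  destruct Hr as [H1 H2]. apply Z.leb_le in H1; apply Z.leb_le in H2. lia.
Qed.

Lemma alias_inj N p p' j j' : (1 <= N)%nat -> inrange N j = true -> inrange N j' = true ->
  (p * Z.of_nat N + j = p' * Z.of_nat N + j')%Z -> p = p' /\ j = j'.
Proof.
  intros HN H1 H2 E. apply inrange_bounds in H1; auto. apply inrange_bounds in H2; auto.
  pose proof (Z.div_mod (Z.of_nat N) 2 ltac:(lia)). pose proof (Z.mod_pos_bound (Z.of_nat N) 2 ltac:(lia)).
  pose proof (Z.div_mod (Z.of_nat N - 1) 2 ltac:(lia)). pose proof (Z.mod_pos_bound (Z.of_nat N - 1) 2 ltac:(lia)).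
  assert (Z.abs (j' - j) < Z.of_nat N)%Z by lia.
  assert ((p - p') * Z.of_nat N = j' - j)%Z by lia.
  assert (p = p') by nia. subst. lia.
Qed.

Lemma lsum_map F (f : Z -> Z) l : lsum F (map f l) = lsum (fun x => F (f x)) l.
Proof. induction l; simpl; auto. rewrite IHl; auto. Qed.

Lemma lsum_flat F (f : Z -> list Z) L : lsum F (flat_map f L) = lsum (fun p => lsum F (f p)) L.
Proof. induction L; simpl; auto. rewrite lsum_app, IHL; auto. Qed.

Lemma alias_sum N J G : (1 <= N)%nat -> NoDup J -> (forall j, In j J -> inrange N j = true) ->
  nng G -> summ G ->
  summ (fun p => lsum (fun j => G (p * Z.of_nat N + j)%Z) J) /\
  NS (fun p => lsum (fun j => G (p * Z.of_nat N + j)%Z) J) <= NS G.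
Proof.
  intros HN HJ HR HG SG. apply NS_bounded_L. intros p; apply lsum_nonneg; auto.
  intros j; apply HG. intros L HL.
  replace (lsum (fun p => lsum (fun j => G (p * Z.of_nat N + j)%Z) J) L)
    with (lsum G (flat_map (fun p => map (fun j => (p * Z.of_nat N + j)%Z) J) L)).
  2: { rewrite lsum_flat. apply lsum_ext. intros p. apply lsum_map. }
  apply lsum_le_NS; auto.
  induction HL as [|p L Hp HL IH]; simpl. constructor.
  apply NoDup_app; auto.
  - apply NoDup_map_NoDup_ForallPairs; auto. intros x y Hx Hy E.
    apply (alias_inj N p p x y); auto.
  - intros z Hz1 Hz2. apply in_map_iff in Hz1. destruct Hz1 as [j [E1 Hj]].
    apply in_flat_map in Hz2. destruct Hz2 as [p' [Hp' Hz2]]. apply in_map_iff in Hz2.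
    destruct Hz2 as [j' [E2 Hj']]. subst.
    destruct (alias_inj N p p' j j'); auto. subst. contradiction.
Qed.

Lemma phi_inj N j : (1 <= N)%nat -> forall x y : Z, (x * Z.of_nat N + j)%Z = (y * Z.of_nat N + j)%Z -> x = y.
Proof. intros; nia. Qed.

Lemma summ_alias_wt s N j : 1/2 < s -> (1 <= N)%nat ->
  summ (fun p => wt (- (2 * s)) (p * Z.of_nat N + j)%Z).
Proof.
  intros Hs HN. apply (NS_reindex (wt (- (2 * s))) (fun p => (p * Z.of_nat N + j)%Z)).
  apply phi_inj; auto. pos. apply zeta_summ; lra.
Qed.

Lemma alias_cs s N j (x : Z -> R) : 1/2 < s -> (1 <= N)%nat -> nng x ->
  summ (fun m => wt (2 * s) m * sqf x m) ->
  summ (fun p => x (p * Z.of_nat N + j)%Z) /\ NS (fun p => x (p * Z.of_nat N + j)%Z) * NS (fun p => x (p * Z.of_nat N + j)%Z) <=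
    NS (fun p => wt (- (2 * s)) (p * Z.of_nat N + j)%Z) * NS (fun p => wt (2 * s) (p * Z.of_nat N + j)%Z * sqf x (p * Z.of_nat N + j)%Z).
Proof.
  intros Hs HN Hx SY.
  set (F := fun p => wt (- s) (p * Z.of_nat N + j)%Z).
  set (G := fun p => wt s (p * Z.of_nat N + j)%Z * x (p * Z.of_nat N + j)%Z).
  assert (E1 : forall p, F p * G p = x (p * Z.of_nat N + j)%Z).
  { intros p; unfold F, G. rewrite <- Rmult_assoc, wt_inv. ring. }
  assert (E2 : forall p, F p * F p = wt (- (2 * s)) (p * Z.of_nat N + j)%Z).
  { intros p; unfold F. rewrite wt_sq. f_equal. ring. }
  assert (E3 : forall p, G p * G p = wt (2 * s) (p * Z.of_nat N + j)%Z * sqf x (p * Z.of_nat N + j)%Z).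
  { intros p; unfold G, sqf. rewrite <- wt_sq. ring. }
  destruct (NS_reindex (fun m => wt (2 * s) m * sqf x m) (fun p => (p * Z.of_nat N + j)%Z)) as [S2 _].
  apply phi_inj; auto. intros m; unfold sqf; pos. auto.
  destruct (NS_cs F G) as [C D]. unfold F; pos. unfold G; pos.
  eapply summ_ext. intros p; symmetry; apply E2. apply summ_alias_wt; auto.
  eapply summ_ext. intros p; symmetry; apply E3. exact S2.
  split. eapply summ_ext. exact E1. exact C.
  rewrite (NS_ext_eq _ _ E1), (NS_ext_eq _ _ E2), (NS_ext_eq _ _ E3) in D.
  apply sqrt_bound_sq in D; auto. pos. apply Rmult_le_pos; apply NS_nonneg; intros p; unfold sqf; pos.
Qed.

Lemma alias_wt s N j : 1/2 < s -> (1 <= N)%nat -> inrange N j = true ->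
  NS (fun p => wt (- (2 * s)) (p * Z.of_nat N + j)%Z) <= Zs s * wt (- (2 * s)) j.
Proof.
  intros Hs HN Hr. unfold Zs. rewrite (Rmult_comm (NS _)), <- NS_scal.
  apply NS_le. intros p; split. pos.
  unfold wt. rewrite Rpower_mult_distr by apply W_pos.
  apply Rpower_anti. apply Rmult_lt_0_compat; apply W_pos. rewrite Rmult_comm; apply W_alias; auto. lra.
  apply summ_scal, zeta_summ. lra.
Qed.

Lemma hterm_eq s u k : hterm s u k = Cmod (u k) * Cmod (u k) * wt (2 * s) k.
Proof. unfold hterm, wt, W. ring. Qed.

Lemma Hs_summ s u : Hs s u -> summ (fun k => Cmod (u k) * Cmod (u k) * wt (2 * s) k).
Proof. intros H. eapply summ_ext. 2: exact H. intros k; apply hterm_eq. Qed.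

Lemma hnorm_NS s u : NS (fun k => Cmod (u k) * Cmod (u k) * wt (2 * s) k) = NS (hterm s u).
Proof. apply NS_ext_eq. intros k; symmetry; apply hterm_eq. Qed.

Definition xf (h v : fseq) (m : Z) : R := NS (fun k => Cmod (h k) * Cmod (v (m - k)%Z)).
Definition Yf (s : R) (h v : fseq) (m : Z) : R := wt (2 * s) m * sqf (xf h v) m.

Lemma Mop_facts s h v : 1/2 < s -> Hs s h -> Hs s v ->
  (forall m, abss (fun k => Cmult (h k) (v (m - k)%Z))) /\
  (forall m, Cmod (Mop h v m) <= xf h v m) /\
  summ (Yf s h v) /\ NS (Yf s h v) <= Kc s * NS (hterm s h) * NS (hterm s v).
Proof.
  intros Hs0 Hh Hv.
  destruct (prod_bound s (fun k => Cmod (h k)) (fun k => Cmod (v k)) Hs0) as [A [B C]].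
  intros k; apply Cmod_ge_0. intros k; apply Cmod_ge_0. apply Hs_summ, Hh. apply Hs_summ, Hv.
  rewrite !hnorm_NS in C.
  assert (AB : forall m, abss (fun k => Cmult (h k) (v (m - k)%Z))).
  { intros m. unfold abss. eapply summ_ext. 2: apply (A m). intros k. simpl. rewrite Cmod_mult. auto. }
  split; [exact AB|]. split.
  - intros m. unfold Mop. eapply Rle_trans. apply Zsum_bound, AB. unfold xf. apply Req_le, NS_ext_eq.
    intros k. apply Cmod_mult.
  - split; [exact B| exact C].
Qed.

Lemma lsum_filter F (f : Z -> bool) L : lsum (fun j => if f j then F j else 0) L = lsum F (filter f L).
Proof. induction L; simpl; auto. destruct (f a); simpl; rewrite IHL; ring. Qed.

Lemma lsum_scal c F l : lsum (fun j => c * F j) l = c * lsum F l.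
Proof. induction l; simpl; [ring| rewrite IHl; ring]. Qed.

Lemma nng_x h v : nng (xf h v).
Proof. intros m. unfold xf. pos. Qed.

Lemma Mop_alias s h v N j : 1/2 < s -> (1 <= N)%nat -> Hs s h -> Hs s v ->
  abss (fun p => Mop h v (p * Z.of_nat N + j)%Z) /\
  Cmod (Zsum (fun p => Mop h v (p * Z.of_nat N + j)%Z)) <= NS (fun p => xf h v (p * Z.of_nat N + j)%Z).
Proof.
  intros Hs0 HN Hh Hv. destruct (Mop_facts s h v Hs0 Hh Hv) as [_ [B [C _]]].
  destruct (alias_cs s N j (xf h v) Hs0 HN (nng_x h v) C) as [D _].
  assert (E : abss (fun p => Mop h v (p * Z.of_nat N + j)%Z)).
  { unfold abss. eapply summ_le. 2: exact D. intros p; split. apply Cmod_ge_0. apply B. }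
  split; auto. eapply Rle_trans. apply Zsum_bound, E. apply NS_le. intros p; split. apply Cmod_ge_0. apply B. exact D.
Qed.

Lemma I_bound s h v N : 1/2 < s -> (1 <= N)%nat -> Hs s h -> Hs s v ->
  summ (hterm s (Iop N (Mop h v))) /\
  NS (hterm s (Iop N (Mop h v))) <= Zs s * (Kc s * NS (hterm s h) * NS (hterm s v)).
Proof.
  intros Hs0 HN Hh Hv. destruct (Mop_facts s h v Hs0 Hh Hv) as [_ [B [C D]]].
  set (Y := Yf s h v).
  assert (HY : nng Y) by (intros m; unfold Y, Yf, sqf; pos; apply nng_x).
  assert (SYj : forall j, summ (fun p => Y (p * Z.of_nat N + j)%Z)).
  { intros j. apply (NS_reindex Y (fun p => (p * Z.of_nat N + j)%Z)); auto. apply phi_inj; auto. }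
  assert (HZ : 0 <= Zs s) by (unfold Zs; pos).
  set (E := fun j => if inrange N j then Zs s * NS (fun p => Y (p * Z.of_nat N + j)%Z) else 0).
  assert (SE : summ E /\ NS E <= Zs s * NS Y).
  { apply NS_bounded_L. intros j; unfold E; destruct (inrange N j); [pos|lra].
    intros L HL. unfold E.
    rewrite (lsum_filter (fun j => Zs s * NS (fun p => Y (p * Z.of_nat N + j)%Z))).
    rewrite lsum_scal. apply Rmult_le_compat_l; auto.
    destruct (NS_lsum (fun j p => Y (p * Z.of_nat N + j)%Z) (filter (inrange N) L) SYj) as [_ E2].
    rewrite <- E2. apply alias_sum; auto. apply NoDup_filter; auto.
    intros j Hj. apply filter_In in Hj. apply Hj. }
  destruct SE as [SE1 SE2].
  assert (PW : forall j, 0 <= hterm s (Iop N (Mop h v)) j <= E j).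
  { intros j. split. unfold hterm. apply Rmult_le_pos. apply pow2_ge_0. unfold Rpower; left; apply exp_pos.
    rewrite hterm_eq. unfold Iop, E. destruct (inrange N j) eqn:Hr.
    - destruct (Mop_alias s h v N j Hs0 HN Hh Hv) as [_ M].
      destruct (alias_cs s N j (xf h v) Hs0 HN (nng_x h v) C) as [_ M2].
      pose proof (alias_wt s N j Hs0 HN Hr) as M3.
      set (z := Cmod (Zsum (fun p : Z => Mop h v (p * Z.of_nat N + j)%Z))) in *.
      set (X := NS (fun p : Z => xf h v (p * Z.of_nat N + j)%Z)) in *.
      assert (0 <= z) by apply Cmod_ge_0.
      assert (z * z <= X * X) by (apply Rmult_le_compat; lra).
      set (Wn := NS (fun p => wt (- (2 * s)) (p * Z.of_nat N + j)%Z)) in *.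
      set (Yj := NS (fun p => wt (2 * s) (p * Z.of_nat N + j)%Z * sqf (xf h v) (p * Z.of_nat N + j)%Z)) in *.
      assert (0 <= Yj) by (unfold Yj; pos; apply nng_x).
      assert (Wn * Yj <= Zs s * wt (- (2 * s)) j * Yj) by (apply Rmult_le_compat_r; auto).
      assert (EE : wt (2 * s) j * wt (- (2 * s)) j = 1) by (rewrite Rmult_comm; apply wt_inv).
      pose proof (wt_pos (2 * s) j).
      assert (H5 : z * z * wt (2 * s) j <= Zs s * wt (- (2 * s)) j * Yj * wt (2 * s) j).
      { apply Rmult_le_compat_r; lra. }
      replace (Zs s * wt (- (2 * s)) j * Yj * wt (2 * s) j) with (Zs s * Yj * (wt (2 * s) j * wt (- (2 * s)) j)) in H5 by ring.
      rewrite EE in H5. unfold Y, Yf. unfold Yj in H5. lra.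
    - rewrite Cmod_0. lra. }
  destruct (NS_le _ _ PW SE1) as [F1 F2]. split; auto.
  eapply Rle_trans. exact F2. eapply Rle_trans. exact SE2. apply Rmult_le_compat_l; auto.
Qed.

Lemma P_bound s h v N : 1/2 < s -> Hs s h -> Hs s v ->
  summ (hterm s (Pop N (Mop h v))) /\ NS (hterm s (Pop N (Mop h v))) <= Kc s * NS (hterm s h) * NS (hterm s v).
Proof.
  intros Hs0 Hh Hv. destruct (Mop_facts s h v Hs0 Hh Hv) as [_ [B [C D]]].
  assert (PW : forall j, 0 <= hterm s (Pop N (Mop h v)) j <= Yf s h v j).
  { intros j. split. unfold hterm. apply Rmult_le_pos. apply pow2_ge_0. unfold Rpower; left; apply exp_pos.
    rewrite hterm_eq. unfold Pop, Yf, sqf. pose proof (wt_pos (2 * s) j).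
    destruct (inrange N j).
    - specialize (B j). pose proof (Cmod_ge_0 (Mop h v j)).
      assert (Cmod (Mop h v j) * Cmod (Mop h v j) <= xf h v j * xf h v j) by (apply Rmult_le_compat; lra).
      nra.
    - rewrite Cmod_0. pose proof (nng_x h v j). nra. }
  destruct (NS_le _ _ PW C) as [F1 F2]. split; auto. lra.
Qed.


Lemma hnorm_eq s u : hnorm s u = sqrt (NS (hterm s u)).
Proof. reflexivity. Qed.

Lemma Zsum_ext f f' : (forall k, f k = f' k) -> Zsum f = Zsum f'.
Proof.
  intros H. unfold Zsum. f_equal; apply Series_ext; intros n; unfold zpair; rewrite !H; auto.
Qed.

Lemma hterm_mono s u w j : Cmod (u j) <= Cmod (w j) -> 0 <= hterm s u j <= hterm s w j.
Proof.
  intros H. rewrite !hterm_eq. pose proof (Cmod_ge_0 (u j)). pose proof (wt_pos (2 * s) j).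
  split. pos. apply Rmult_le_compat_r. lra. apply Rmult_le_compat; lra.
Qed.

Lemma Hs_mono s u w : (forall j, Cmod (u j) <= Cmod (w j)) -> Hs s w -> Hs s u /\ NS (hterm s u) <= NS (hterm s w).
Proof. intros H Hw. apply NS_le; auto. intros j; apply hterm_mono, H. Qed.

Lemma opnorm_le s A B : 0 <= B ->
  (forall u, Hs s u -> Hs s (A u) /\ hnorm s (A u) <= B * hnorm s u) -> Rbar_le (opnorm s A) (Finite B).
Proof.
  intros HB H. unfold opnorm. destruct (Lub_Rbar_correct (fun r => exists u, Hs s u /\ 0 < hnorm s u /\
     (r = hnorm s (A u) / hnorm s u \/ ~ Hs s (A u)))) as [_ Hl].
  apply Hl. intros r [u [Hu [Hp [Er | Hn]]]].
  - subst r. simpl. destruct (H u Hu) as [_ Hb]. apply Rle_div_l; auto.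
  - exfalso. apply Hn, H, Hu.
Qed.

Lemma hnorm_split x y z c : 0 <= c -> 0 <= y -> 0 <= z -> x <= c * (y * z) -> sqrt x <= sqrt c * sqrt y * sqrt z.
Proof.
  intros. rewrite <- sqrt_mult_alt by auto. rewrite <- sqrt_mult_alt by pos.
  apply sqrt_le_1_alt. lra.
Qed.

Theorem lemmal (s : R) (g : fseq) :
  1 / 2 < s -> Hs s g ->
  exists Cs : R, 0 < Cs /\
    forall N M : nat, (1 <= N)%nat -> (1 <= M)%nat ->
      Rbar_le
        (opnorm s (opsub (fun u => Iop N (Mop g (Cplus_op u)))
                         (fun u => Iop N (Mop (Pop M g) (Cplus_op u)))))
        (Finite (Cs * hnorm s (fsub g (Pop M g))))
      /\
      Rbar_le
        (opnorm s (opsub (fun u => Pop N (Mop g (Cplus_op u)))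
                         (fun u => Pop N (Mop (Pop M g) (Cplus_op u)))))
        (Finite (Cs * hnorm s (fsub g (Pop M g)))).
Proof.
  intros Hs0 Hg.
  assert (HZ : 0 <= Zs s) by (unfold Zs; pos).
  assert (HK : 0 <= Kc s) by (unfold Kc; apply Rmult_le_pos; [apply Rmult_le_pos; [lra| unfold Rpower; left; apply exp_pos] | auto]).
  set (Cs := sqrt (Zs s * Kc s) + sqrt (Kc s) + 1).
  assert (HC1 : sqrt (Zs s * Kc s) <= Cs) by (unfold Cs; pose proof (sqrt_pos (Kc s)); lra).
  assert (HC2 : sqrt (Kc s) <= Cs) by (unfold Cs; pose proof (sqrt_pos (Zs s * Kc s)); lra).
  exists Cs. split. unfold Cs; pose proof (sqrt_pos (Kc s)); pose proof (sqrt_pos (Zs s * Kc s)); lra.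
  intros N M HN HM.
  set (Pg := Pop M g). set (h := fsub g Pg).
  assert (HPg : Hs s Pg).
  { apply (Hs_mono s Pg g); auto. intros j; unfold Pg, Pop. destruct (inrange M j). lra. rewrite Cmod_0; apply Cmod_ge_0. }
  assert (Hh : Hs s h).
  { apply (Hs_mono s h g); auto. intros j; unfold h, Pg, Pop, fsub. destruct (inrange M j).
    replace (Cminus (g j) (g j)) with (RtoC 0) by ring. rewrite Cmod_0; apply Cmod_ge_0.
    replace (Cminus (g j) (RtoC 0)) with (g j) by ring. lra. }
  assert (Hhn : 0 <= hnorm s h) by apply sqrt_pos.
  assert (Hv : forall u, Hs s u -> Hs s (Cplus_op u) /\ NS (hterm s (Cplus_op u)) <= NS (hterm s u)).
  { intros u Hu. apply Hs_mono; auto. intros j; unfold Cplus_op. destruct (Z.leb 0 j). lra. rewrite Cmod_0; apply Cmod_ge_0. }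
  assert (Mdiff : forall v, Hs s v -> forall m, Cminus (Mop g v m) (Mop Pg v m) = Mop h v m).
  { intros v Hvv m. destruct (Mop_facts s g v Hs0 Hg Hvv) as [A1 _]. destruct (Mop_facts s Pg v Hs0 HPg Hvv) as [A2 _].
    unfold Mop. rewrite <- Zsum_minus by auto. apply Zsum_ext. intros k. unfold h, fsub. ring. }
  split.
  - apply opnorm_le. apply Rmult_le_pos; [|exact Hhn]. unfold Cs; pose proof (sqrt_pos (Kc s)); pose proof (sqrt_pos (Zs s * Kc s)); lra.
    intros u Hu. destruct (Hv u Hu) as [Hvv Hvn]. set (v := Cplus_op u) in *.
    assert (E : forall j, opsub (fun u => Iop N (Mop g (Cplus_op u))) (fun u => Iop N (Mop Pg (Cplus_op u))) u j
                          = Iop N (Mop h v) j).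
    { intros j. unfold opsub, fsub, Iop. fold v Pg. destruct (inrange N j).
      - destruct (Mop_alias s g v N j Hs0 HN Hg Hvv) as [B1 _]. destruct (Mop_alias s Pg v N j Hs0 HN HPg Hvv) as [B2 _].
        rewrite <- Zsum_minus by auto. apply Zsum_ext. intros p. apply Mdiff; auto.
      - ring. }
    assert (EH : forall j, hterm s (opsub (fun u => Iop N (Mop g (Cplus_op u))) (fun u => Iop N (Mop Pg (Cplus_op u))) u) j = hterm s (Iop N (Mop h v)) j).
    { intros j; unfold hterm; rewrite E; auto. }
    destruct (I_bound s h v N Hs0 HN Hh Hvv) as [I1 I2].
    split. eapply summ_ext. intros j; symmetry; apply EH. exact I1.
    rewrite !hnorm_eq. rewrite (NS_ext_eq _ _ EH).
    assert (0 <= NS (hterm s h)) by (apply NS_nonneg; intros j; rewrite hterm_eq; pos).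
    assert (0 <= NS (hterm s v)) by (apply NS_nonneg; intros j; rewrite hterm_eq; pos).
    assert (0 <= NS (hterm s u)) by (apply NS_nonneg; intros j; rewrite hterm_eq; pos).
    assert (Hx : NS (hterm s (Iop N (Mop h v))) <= (Zs s * Kc s) * (NS (hterm s h) * NS (hterm s u))).
    { eapply Rle_trans. apply I2.
      assert (Kc s * NS (hterm s h) * NS (hterm s v) <= Kc s * NS (hterm s h) * NS (hterm s u)) by (apply Rmult_le_compat_l; [apply Rmult_le_pos; auto| auto]).
      assert (Zs s * (Kc s * NS (hterm s h) * NS (hterm s v)) <= Zs s * (Kc s * NS (hterm s h) * NS (hterm s u))) by (apply Rmult_le_compat_l; lra).
      lra. }
    eapply Rle_trans. apply (hnorm_split _ _ _ (Zs s * Kc s) (Rmult_le_pos _ _ HZ HK) H H1 Hx).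
    assert (0 <= sqrt (NS (hterm s u))) by apply sqrt_pos.
    assert (sqrt (Zs s * Kc s) * sqrt (NS (hterm s h)) <= Cs * sqrt (NS (hterm s h))) by (apply Rmult_le_compat_r; auto; apply sqrt_pos).
    apply Rmult_le_compat_r; auto.
  - apply opnorm_le. apply Rmult_le_pos; [|exact Hhn]. unfold Cs; pose proof (sqrt_pos (Kc s)); pose proof (sqrt_pos (Zs s * Kc s)); lra.
    intros u Hu. destruct (Hv u Hu) as [Hvv Hvn]. set (v := Cplus_op u) in *.
    assert (E : forall j, opsub (fun u => Pop N (Mop g (Cplus_op u))) (fun u => Pop N (Mop Pg (Cplus_op u))) u j
                          = Pop N (Mop h v) j).
    { intros j. unfold opsub, fsub, Pop at 1 2 3. fold v Pg. destruct (inrange N j).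
      - apply Mdiff; auto.
      - ring. }
    assert (EH : forall j, hterm s (opsub (fun u => Pop N (Mop g (Cplus_op u))) (fun u => Pop N (Mop Pg (Cplus_op u))) u) j = hterm s (Pop N (Mop h v)) j).
    { intros j; unfold hterm; rewrite E; auto. }
    destruct (P_bound s h v N Hs0 Hh Hvv) as [I1 I2].
    split. eapply summ_ext. intros j; symmetry; apply EH. exact I1.
    rewrite !hnorm_eq. rewrite (NS_ext_eq _ _ EH).
    assert (0 <= NS (hterm s h)) by (apply NS_nonneg; intros j; rewrite hterm_eq; pos).
    assert (0 <= NS (hterm s v)) by (apply NS_nonneg; intros j; rewrite hterm_eq; pos).
    assert (0 <= NS (hterm s u)) by (apply NS_nonneg; intros j; rewrite hterm_eq; pos).
    assert (Hx : NS (hterm s (Pop N (Mop h v))) <= Kc s * (NS (hterm s h) * NS (hterm s u))).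
    { eapply Rle_trans. apply I2.
      assert (Kc s * NS (hterm s h) * NS (hterm s v) <= Kc s * NS (hterm s h) * NS (hterm s u)) by (apply Rmult_le_compat_l; [apply Rmult_le_pos; auto| auto]).
      lra. }
    eapply Rle_trans. apply (hnorm_split _ _ _ _ HK H H1 Hx).
    assert (0 <= sqrt (NS (hterm s u))) by apply sqrt_pos.
    assert (sqrt (Kc s) * sqrt (NS (hterm s h)) <= Cs * sqrt (NS (hterm s h))) by (apply Rmult_le_compat_r; auto; apply sqrt_pos).
    apply Rmult_le_compat_r; auto.
Qed.
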